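(* Let $\ell,k$ be positive integers with $k\ge 2$, and let $G_{\ell,k}$ be the graph constructed as follows: take disjoint paths $x_{0,r}x_{1,r}\cdots x_{\ell,r}$ for $1\le r\le k$, identify $x_{0,1},\dots,x_{0,k}$ into a single vertex $u$, identify $x_{\ell,1},\dots,x_{\ell,k}$ into a single vertex $v$, and add the edge $uv$. For vertices $a,b\ne u$ write $a\sim_u b$ if there is a graph automorphism $\pi$ of $G_{\ell,k}$ with $\pi(u)=u$ and $\pi(a)=b$. Then the equivalence classes of $\sim_u$ are $\{x_{1,r}\}_{r=1}^k,\{x_{2,r}\}_{r=1}^k,\dots,\{x_{\ell-1,r}\}_{r=1}^k$ and $\{v\}$.
   Context: A graph automorphism is a bijection of the vertex set preserving adjacency and non-adjacency. *)

(* Defs.v *)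
From mathcomp Require Import all_boot all_fingroup.
Set Implicit Arguments. Unset Strict Implicit. Unset Printing Implicit Defensive.

(* Vertices of G_{l,k}:
   None               = u   (= x_{0,r} for all r)
   Some None          = v   (= x_{l,r} for all r)
   Some (Some (i,r))  = x_{i+1, r+1}, for i : 'I_(l-1), r : 'I_k
   (internal path vertices x_{1..l-1, 1..k}). *)
Definition gvert (l k : nat) : finType := option (option ('I_l.-1 * 'I_k)).

Definition gu {l k : nat} : gvert l k := None.
Definition gv {l k : nat} : gvert l k := Some None.
Definition gx {l k : nat} (i : 'I_l.-1) (r : 'I_k) : gvert l k := Some (Some (i, r)).

Definition gadj (l k : nat) (a b : gvert l k) : bool :=
  match a, b with
  | None, Some None | Some None, None => true
  | None, Some (Some (i, _)) | Some (Some (i, _)), None =>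
      i == 0 :> nat                                         (* u -- x_{1,r} *)
  | Some None, Some (Some (i, _)) | Some (Some (i, _)), Some None =>
      i.+2 == l                                             (* x_{l-1,r} -- v *)
  | Some (Some (i, r)), Some (Some (j, s)) =>
      (r == s) && ((i.+1 == j :> nat) || (j.+1 == i :> nat))
  | _, _ => false
  end.

Definition is_graph_aut (l k : nat) (p : {perm gvert l k}) : Prop :=
  forall a b, gadj (p a) (p b) = gadj a b.

Definition sim_u (l k : nat) (a b : gvert l k) : Prop :=
  exists p : {perm gvert l k}, is_graph_aut p /\ p gu = gu /\ p a = b.

(* Main.v *)
Require Import Defs.
From mathcomp Require Import all_boot all_fingroup.
From mathcomp Require Import zify.
Set Implicit Arguments. Unset Strict Implicit. Unset Printing Implicit Defensive.

Section S.
Variables (l k : nat).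

Definition relab (sg : {perm 'I_k}) (a : gvert l k) : gvert l k :=
  match a with Some (Some (i, r)) => Some (Some (i, sg r)) | _ => a end.

Lemma relab_inj sg : injective (relab sg).
Proof.
case=> [[[i r]|]|]; case=> [[[j s]|]|] //= [] -> /perm_inj -> //.
Qed.

Lemma relab_aut sg : is_graph_aut (perm (@relab_inj sg)).
Proof.
move=> a b; rewrite !permE.
case: a => [[[i r]|]|]; case: b => [[[j s]|]|] //=.
by rewrite (inj_eq (@perm_inj _ sg)).
Qed.

Lemma aut_inv (p : {perm gvert l k}) : is_graph_aut p -> is_graph_aut (p^-1)%g.
Proof. by move=> H a b; rewrite -H !permKV. Qed.

Lemma claim n : forall p : {perm gvert l k}, is_graph_aut p -> p gu = gu -> p gv = gv ->
  forall i : 'I_l.-1, i <= n -> forall r, exists s, p (gx i r) = gx i s.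
Proof.
elim: n => [|n IH] p Hp pu pv i hi r.
- have H : gadj gu (p (gx i r)) = true.
    by rewrite -pu Hp /=; apply/eqP; lia.
  move: H; case E: (p (gx i r)) => [[[j s]|]|] /= H.
  + move/eqP: H => hj; exists s; congr (Some (Some (_, _))); apply: val_inj => /=; lia.
  + by have /perm_inj : p (gx i r) = p gv by rewrite E pv.
  + by have /perm_inj : p (gx i r) = p gu by rewrite E pu.
- case: (leqP i n) => hin; first exact: IH.
  have hn : n < l.-1 by move: (ltn_ord i); lia.
  pose i' := Ordinal hn.
  have [s' Es'] := IH p Hp pu pv i' (leqnn n) r.
  have Hi : i = n.+1 :> nat by lia.
  have H : gadj (gx i' s') (p (gx i r)) = true.
    by rewrite -Es' Hp /= eqxx /=; apply/orP; left; apply/eqP; rewrite /= Hi.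
  move: H; case E: (p (gx i r)) => [[[j s]|]|] /= H.
  + move: H => /andP [_ /orP [/eqP hj|/eqP hj]].
    * by exists s; congr (Some (Some (_, _))); apply: val_inj => /=; lia.
    * have pu' : (p^-1)%g gu = gu by rewrite -{1}pu permK.
      have pv' : (p^-1)%g gv = gv by rewrite -{1}pv permK.
      have hj' : j <= n by lia.
      have [t Et] := IH (p^-1)%g (aut_inv Hp) pu' pv' j hj' s.
      by move: Et; rewrite /gx -E permK => -[] /(congr1 val) /=; lia.
  + by have /perm_inj : p (gx i r) = p gv by rewrite E pv.
  + by have /perm_inj : p (gx i r) = p gu by rewrite E pu.
Qed.

Lemma fix_v (p : {perm gvert l k}) : 0 < l -> 2 <= k -> is_graph_aut p -> p gu = gu -> p gv = gv.
Proof.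
move=> hl hk Hp pu.
have H := Hp gu gv; rewrite pu /= in H.
move: H; case E: (p gv) => [[[j s]|]|] //=; last first.
move=> /eqP hj.
(* l >= 2 since 'I_l.-1 inhabited *)
have hl2 : l.-2 < l.-1 by have := ltn_ord j; move: (nat_of_ord j) => jj; rewrite -!subn1; lia.
have k0 : 0 < k by lia. have k1 : 1 < k by lia.
pose w0 : gvert l k := gx (Ordinal hl2) (Ordinal k0).
pose w1 : gvert l k := gx (Ordinal hl2) (Ordinal k1).
have A0 : gadj gv w0 by rewrite /= ; apply/eqP; move: (ltn_ord j); lia.
have A1 : gadj gv w1 by rewrite /= ; apply/eqP; move: (ltn_ord j); lia.
rewrite -(Hp gv) E in A0. rewrite -(Hp gv) E in A1.
have N0 : p w0 != gu by rewrite -pu (inj_eq (@perm_inj _ p)).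
have N1 : p w1 != gu by rewrite -pu (inj_eq (@perm_inj _ p)).
have key : p w0 = p w1.
  move: A0 A1 N0 N1; case: (p w0) => [[[a t]|]|]; case: (p w1) => [[[b t']|]|] //=.
  - move=> /andP [/eqP <- /orP [/eqP ha|/eqP ha]] /andP [/eqP <- /orP [/eqP hb|/eqP hb]] _ _ //;
      try lia.
    by congr (Some (Some (_, _))); apply: val_inj; rewrite /= -ha -hb.
  - move=> /andP [_ /orP [/eqP ha|/eqP ha]] /eqP hb _ _; move: (ltn_ord a); lia.
  - move=> /eqP ha /andP [_ /orP [/eqP hb|/eqP hb]] _ _; move: (ltn_ord b); lia.
by move/perm_inj: key.
Qed.

End S.

Theorem proposition16 (l k : nat) (hl : 0 < l) (hk : 2 <= k) :
  forall a b : gvert l k, a <> gu -> b <> gu ->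
    (sim_u a b <->
      ((a = gv /\ b = gv) \/
       (exists (i : 'I_l.-1) (r s : 'I_k), a = gx i r /\ b = gx i s))).
Proof.
move=> a b ha hb; split.
- move=> [p [Hp [pu pab]]].
  have pv := fix_v hl hk Hp pu.
  move: ha pab; case: a => [[[i r]|]|] // _.
  + have [s Es] := claim Hp pu pv (leqnn i) r.
    move=> <-; right; exists i, r, s; split => //.
  + by move=> <-; left.
- rewrite /sim_u; case=> [[-> ->]|[i [r [s [-> ->]]]]].
  + by exists 1%g; split; [move=> ? ?; rewrite !perm1 | rewrite !perm1].
  + exists (perm (@relab_inj l k (tperm r s))); split; first exact: relab_aut.
    by rewrite !permE /= tpermL.
Qed.
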